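(* Let $l\ge0$ be an integer and $r$ a real number with $\frac{l}{2l+1}<r<\frac12$, and put $\delta=r-\frac{l}{2l+1}$. If $X\subseteq S^1$ is a finite subset with $\mathrm{wf}_{<}(X;r)>\frac{l}{2l+1}$, then $X$ is an $\big((l+\frac12)\delta\big)$-covering of $S^1$.
   Context: $S^1$ is the circle of circumference $1$ with arc-length metric; $\vec d(x,y)$ is the clockwise distance from $x$ to $y$. $X$ is an $\varepsilon$-covering of $S^1$ if every point of $S^1$ is at distance less than $\varepsilon$ from some point of $X$. For finite $X$ and $0<r<\frac12$, $\overrightarrow{\mathbf{VR}}_{<}(X;r)$ is the directed graph on $X$ with $x_1\to x_2$ iff $0<\vec d(x_1,x_2)<r$ (a cyclic graph with the clockwise order), and $\mathrm{wf}_{<}(X;r)=\sup\{k/n:\exists$ cyclic homomorphism $\overrightarrow{C_n^k}\to\overrightarrow{\mathbf{VR}}_{<}(X;r)\}$, where $\overrightarrow{C_n^k}$ ($0\le k<n/2$) has vertices $\{0,\dots,n-1\}$ with $i\to j$ iff $0<(j-i)\bmod n\le k$, and a cyclic homomorphism is a vertex map sending each directed edge to a directed edge or a single vertex, whose fibres are sets of cyclically consecutive vertices, that reflects cyclic betweenness ($f(s)\prec f(s')\prec f(s'')$ implies $s\prec s'\prec s''$), and that is non-constant if the source has a directed cycle. *)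

(* Defs.v *)
From Stdlib Require Import Reals Lra Lia List Arith.
From Coquelicot Require Import Coquelicot.
Open Scope R_scope.

(* S^1 = R/Z of circumference 1, points represented by reals in [0,1).
   "Clockwise" is the increasing direction of the parameter. *)
Definition on_circle (x : R) : Prop := 0 <= x < 1.

Definition cwd (x y : R) : R := if Rle_dec x y then y - x else y - x + 1.

Definition circ_dist (x y : R) : R := Rmin (cwd x y) (cwd y x).

Definition eps_covering (X : list R) (eps : R) : Prop :=
  forall p, on_circle p -> exists x, In x X /\ circ_dist p x < eps.

Definition cbetween (a b c : R) : Prop := 0 < cwd a b < cwd a c.

Definition vr_edge (r x1 x2 : R) : Prop := 0 < cwd x1 x2 < r.

Definition cmod (n i j : nat) : nat := ((j + n - i) mod n)%nat.
Definition cnk_edge (n k i j : nat) : Prop := (0 < cmod n i j <= k)%nat.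
Definition cbetween_nat (n s s' s'' : nat) : Prop :=
  (0 < cmod n s s' < cmod n s s'')%nat.

Definition cnk_has_dcycle (n k : nat) : Prop :=
  exists (m : nat) (p : nat -> nat), (0 < m)%nat /\ p 0%nat = p m /\
    (forall i, (i <= m)%nat -> (p i < n)%nat) /\
    (forall i, (i < m)%nat -> cnk_edge n k (p i) (p (S i))).

Definition cyclic_hom (n k : nat) (X : list R) (r : R) (f : nat -> R) : Prop :=
  (forall i, (i < n)%nat -> In (f i) X) /\
  (forall i j, (i < n)%nat -> (j < n)%nat -> cnk_edge n k i j ->
      vr_edge r (f i) (f j) \/ f i = f j) /\
  (forall y, exists a m, (a < n)%nat /\ (m <= n)%nat /\
      forall i, (i < n)%nat -> (f i = y <-> (cmod n a i < m)%nat)) /\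
  (forall s s' s'', (s < n)%nat -> (s' < n)%nat -> (s'' < n)%nat ->
      cbetween (f s) (f s') (f s'') -> cbetween_nat n s s' s'') /\
  (cnk_has_dcycle n k -> exists i j, (i < n)%nat /\ (j < n)%nat /\ f i <> f j).

Definition wf_lt (X : list R) (r : R) : Rbar :=
  Lub_Rbar (fun q => exists (n k : nat) (f : nat -> R),
    (2 * k < n)%nat /\ cyclic_hom n k X r f /\ q = INR k / INR n).

(* Main.v *)
Require Import Defs.
From Stdlib Require Import Reals Lra Lia List Arith Classical.
From Coquelicot Require Import Coquelicot.
Open Scope R_scope.

Lemma mod2 (n x : nat) : (x < 2*n)%nat -> (x mod n = if x <? n then x else x - n)%nat.
Proof. intros H. destruct (x <? n) eqn:E.
- apply Nat.ltb_lt in E. apply Nat.mod_small; auto.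
- apply Nat.ltb_ge in E. replace x with ((x - n) + 1*n)%nat at 1 by lia.
  rewrite Nat.mod_add by lia. apply Nat.mod_small; lia. Qed.

Lemma cmod_idx n b i j : (b < n)%nat -> (i < n)%nat -> (j < n)%nat ->
  cmod n ((b+i) mod n) ((b+j) mod n) = (if i <=? j then j - i else j + n - i)%nat.
Proof. intros Hb Hi Hj. unfold cmod.
  assert (HA: exists A, ((b+j) mod n = A /\ ((A = b + j /\ b + j < n) \/ (A = b + j - n /\ n <= b + j)) /\ (A < n))%nat).
  { rewrite (mod2 n (b+j)) by lia. destruct (Nat.ltb_spec (b+j) n); eexists; split; [reflexivity| lia| reflexivity | lia]. }
  assert (HB: exists A, ((b+i) mod n = A /\ ((A = b + i /\ b + i < n) \/ (A = b + i - n /\ n <= b + i)) /\ (A < n))%nat).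
  { rewrite (mod2 n (b+i)) by lia. destruct (Nat.ltb_spec (b+i) n); eexists; split; [reflexivity| lia| reflexivity | lia]. }
  destruct HA as [A [-> [HA1 HA2]]]. destruct HB as [B [-> [HB1 HB2]]].
  rewrite mod2 by lia.
  destruct (Nat.ltb_spec (A + n - B) n); destruct (Nat.leb_spec i j); lia.
Qed.

Lemma blk (n q w : nat): (w < n)%nat -> ((q*n + w) / n = q /\ (q*n+w) mod n = w)%nat.
Proof. intros H. split.
- rewrite Nat.div_add_l by lia. rewrite Nat.div_small by lia. lia.
- rewrite Nat.add_comm, Nat.mod_add by lia. apply Nat.mod_small; lia. Qed.

Lemma argmin (h : nat -> R) (n : nat) : (0 < n)%nat -> exists i, (i < n)%nat /\ forall j, (j < n)%nat -> h i <= h j.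
Proof. induction n; intros H. lia.
  destruct (Nat.eq_dec n 0). subst. exists 0%nat. split. lia. intros j Hj. replace j with 0%nat by lia. lra.
  destruct IHn as [i [Hi Hm]]. lia.
  destruct (Rle_dec (h i) (h n)).
  - exists i. split. lia. intros j Hj. destruct (Nat.eq_dec j n). subst; auto. apply Hm; lia.
  - exists n. split. lia. intros j Hj. destruct (Nat.eq_dec j n). subst; lra. specialize (Hm j ltac:(lia)). lra.
Qed.

Section T.
Lemma cwdT1 p x y : on_circle p -> on_circle x -> on_circle y -> cwd p x <= cwd p y -> cwd x y = cwd p y - cwd p x.
Proof. unfold on_circle, cwd; intros; repeat destruct Rle_dec; lra. Qed.
Lemma cwdT2 p x y : on_circle p -> on_circle x -> on_circle y -> cwd p y < cwd p x -> cwd x y = cwd p y - cwd p x + 1.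
Proof. unfold on_circle, cwd; intros; repeat destruct Rle_dec; lra. Qed.
Lemma Tinj p x y : on_circle p -> on_circle x -> on_circle y -> cwd p x = cwd p y -> x = y.
Proof. unfold on_circle, cwd; intros; repeat destruct Rle_dec; lra. Qed.
End T.

Definition idx n b j := ((b+j) mod n)%nat.

Lemma core (n k : nat) (f : nat -> R) (X : list R) (r E p : R) (l : nat) :
  (2*k < n)%nat -> cyclic_hom n k X r f -> (forall x, In x X -> on_circle x) -> on_circle p ->
  (forall x, In x X -> E <= cwd p x <= 1 - E) -> 0 < r -> r < 1/2 ->
  (l*n < k*(2*l+1))%nat -> INR (2*l+1) * r <= 2*E + INR l -> False.
Proof.
  intros Hkn [Hin [Hedge [Hfib [Hbet Hnc]]]] HXc Hp HXE Hr0 Hr Hlk Hfin.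
  assert (Hk: (k <> 0)%nat) by (intro; subst; lia).
  assert (Hn0: (0 < n)%nat) by lia.
  destruct Hnc as [i1 [j1 [Hi1 [Hj1 Hneq]]]].
  { exists n, (fun i => if (i =? n)%nat then 0%nat else i). split; [lia|]. split.
    { rewrite Nat.eqb_refl. destruct (Nat.eqb_spec 0 n); lia. }
    split.
    { intros i Hi. destruct (Nat.eqb_spec i n); lia. }
    intros i Hi. destruct (Nat.eqb_spec i n); [lia|]. destruct (Nat.eqb_spec (S i) n).
    - unfold cnk_edge, cmod. rewrite mod2 by lia. destruct (Nat.ltb_spec (0 + n - i) n); lia.
    - unfold cnk_edge, cmod. rewrite mod2 by lia. destruct (Nat.ltb_spec (S i + n - i) n); lia. }
  destruct (argmin (fun i => cwd p (f i)) n Hn0) as [i0 [Hi0 Hmin]].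
  destruct (Hfib (f i0)) as [b [m [Hb [Hm Hbm]]]].
  assert (Hidx: forall j, (idx n b j < n)%nat) by (intros; apply Nat.mod_upper_bound; lia).
  assert (Hpos: forall j, (j<n)%nat -> cmod n b (idx n b j) = j).
  { intros j Hj. unfold idx. replace b with ((b+0) mod n)%nat at 1 by (rewrite Nat.add_0_r, Nat.mod_small; lia).
    rewrite cmod_idx by lia. destruct (Nat.leb_spec 0 j); lia. }
  assert (HcF: forall j, on_circle (f (idx n b j))) by (intros; apply HXc, Hin, Hidx).
  assert (HEF: forall j, E <= cwd p (f (idx n b j)) <= 1 - E) by (intros; apply HXE, Hin, Hidx).
  assert (Hy0c: on_circle (f i0)) by (apply HXc, Hin; auto).
  assert (Hfib': forall j, (j<n)%nat -> f (idx n b j) = f i0 <-> (j < m)%nat).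
  { intros j Hj. rewrite Hbm by apply Hidx. rewrite Hpos by auto. tauto. }
  assert (Hmin': forall j, cwd p (f i0) <= cwd p (f (idx n b j))) by (intros; apply Hmin, Hidx).
  assert (Hm1: (1 <= m)%nat).
  { assert (H := proj1 (Hbm i0 Hi0) eq_refl). lia. }
  assert (Hcm: forall i, (cmod n b i < n)%nat) by (intros; unfold cmod; apply Nat.mod_upper_bound; lia).
  assert (Hmn: (m < n)%nat).
  { destruct (Nat.ltb_spec m n); auto. exfalso. apply Hneq.
    rewrite (proj2 (Hbm i1 Hi1)), (proj2 (Hbm j1 Hj1)); auto; [specialize (Hcm j1)|specialize (Hcm i1)]; lia. }
  assert (Hcmi: forall u w, (u < n)%nat -> (w < n)%nat -> cmod n (idx n b u) (idx n b w) = (if (u <=? w) then w - u else w + n - u)%nat).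
  { intros. unfold idx. apply cmod_idx; lia. }
  assert (EdgeF: forall u w, (u < w < n)%nat -> (w - u <= k)%nat ->
     f (idx n b u) = f (idx n b w) \/ cwd (f (idx n b u)) (f (idx n b w)) < r).
  { intros u w H1 H2. assert (Hc: cnk_edge n k (idx n b u) (idx n b w)).
    { unfold cnk_edge. rewrite Hcmi by lia. destruct (Nat.leb_spec u w); lia. }
    destruct (Hedge (idx n b u) (idx n b w) (Hidx _) (Hidx _) Hc) as [[_ H]|H]; auto. }
  assert (EdgeB: forall u w, (w < u < n)%nat -> (w + n - u <= k)%nat ->
     f (idx n b u) = f (idx n b w) \/ cwd (f (idx n b u)) (f (idx n b w)) < r).
  { intros u w H1 H2. assert (Hc: cnk_edge n k (idx n b u) (idx n b w)).
    { unfold cnk_edge. rewrite Hcmi by lia. destruct (Nat.leb_spec u w); lia. }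
    destruct (Hedge (idx n b u) (idx n b w) (Hidx _) (Hidx _) Hc) as [[_ H]|H]; auto. }
  assert (Hinj: forall u w, cwd p (f (idx n b u)) = cwd p (f (idx n b w)) -> f (idx n b u) = f (idx n b w)).
  { intros. apply (Tinj p); auto. }
  assert (Mono: forall a c, (a < c < n)%nat -> cwd p (f (idx n b a)) <= cwd p (f (idx n b c))).
  { intros a c Hac. destruct (Rle_dec (cwd p (f (idx n b a))) (cwd p (f (idx n b c)))) as [|Hlt]; auto.
    exfalso. apply Rnot_le_lt in Hlt.
    assert (Ham: (m <= a)%nat).
    { destruct (Nat.ltb_spec a m); auto. rewrite (proj2 (Hfib' a ltac:(lia)) ltac:(lia)) in Hlt.
      specialize (Hmin' c). lra. }
    assert (H0: f (idx n b 0) = f i0) by (apply Hfib'; lia).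
    assert (Hy: cwd p (f i0) < cwd p (f (idx n b c))).
    { destruct (Rle_lt_or_eq_dec _ _ (Hmin' c)) as [|He]; auto. exfalso.
      rewrite <- H0 in He. apply Hinj in He. rewrite H0 in He. symmetry in He. apply Hfib' in He; lia. }
    assert (Hbt: cbetween (f (idx n b 0)) (f (idx n b c)) (f (idx n b a))).
    { unfold cbetween. rewrite H0. rewrite (cwdT1 p (f i0) (f (idx n b c))), (cwdT1 p (f i0) (f (idx n b a))); auto; lra. }
    apply Hbet in Hbt; try apply Hidx. unfold cbetween_nat in Hbt. rewrite !Hcmi in Hbt by lia.
    destruct (Nat.leb_spec 0 c); destruct (Nat.leb_spec 0 a); lia. }
  assert (Degen: forall u w, (w < u < n)%nat -> (w + n - u = k)%nat ->
      cwd p (f (idx n b w)) = cwd p (f (idx n b u)) -> False).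
  { intros u w Hwu Hk' He.
    assert (H0: f (idx n b 0) = f i0) by (apply Hfib'; lia).
    destruct (Req_dec (f (idx n b w)) (f i0)) as [Hv|Hv].
    - assert (Hu: (u < m)%nat).
      { apply Hfib'; [lia|]. rewrite <- Hv. symmetry. apply Hinj. auto. }
      assert (Hdm: f (idx n b m) <> f (idx n b u)).
      { intro Hx. assert (f (idx n b u) = f i0) by (rewrite <- Hv; symmetry; apply Hinj; auto).
        rewrite H in Hx. apply Hfib' in Hx; lia. }
      assert (Hlt: cwd p (f (idx n b u)) < cwd p (f (idx n b m))).
      { destruct (Rle_lt_or_eq_dec _ _ (Mono u m ltac:(lia))) as [|Hx]; auto.
        apply Hinj in Hx. congruence. }
      destruct (EdgeF u m ltac:(lia) ltac:(lia)) as [Hx|H1]; [congruence|].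
      destruct (EdgeB m w ltac:(lia) ltac:(lia)) as [Hx|H2].
      { apply Hdm. rewrite Hx. apply Hinj. auto. }
      rewrite (cwdT1 p) in H1 by (auto; lra). rewrite (cwdT2 p) in H2 by (auto; lra). lra.
    - assert (Hw: (m <= w)%nat).
      { destruct (Nat.ltb_spec w m); auto. exfalso. apply Hv. apply Hfib'; lia. }
      assert (Hlt: cwd p (f (idx n b 0)) < cwd p (f (idx n b w))).
      { rewrite H0. destruct (Rle_lt_or_eq_dec _ _ (Hmin' w)) as [|Hx]; auto.
        rewrite <- H0 in Hx. apply Hinj in Hx. congruence. }
      destruct (EdgeB u 0%nat ltac:(lia) ltac:(lia)) as [Hx|H1].
      { assert (f (idx n b w) = f (idx n b u)) by (apply Hinj; auto). congruence. }
      destruct (EdgeF 0%nat w ltac:(lia) ltac:(lia)) as [Hx|H2].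
      { rewrite H0 in Hx. congruence. }
      rewrite (cwdT2 p) in H1 by (auto; lra). rewrite (cwdT1 p) in H2 by (auto; lra). lra. }
  set (g := fun x => cwd p (f (idx n b (x mod n))) + INR (x / n)).
  assert (Step: forall x, g (x + k)%nat - g x < r).
  { intros x. unfold g.
    assert (Hx := Nat.div_mod_eq x n). assert (Hu := Nat.mod_upper_bound x n ltac:(lia)).
    set (q := (x / n)%nat) in *. set (u := (x mod n)%nat) in *.
    destruct (Nat.ltb_spec (u+k) n).
    - replace (x + k)%nat with (q*n + (u+k))%nat by lia.
      destruct (blk n q (u+k)) as [-> ->]; auto.
      destruct (EdgeF u (u+k)%nat ltac:(lia) ltac:(lia)) as [He|H1].
      + rewrite He. lra.
      + destruct (Rle_dec (cwd p (f (idx n b u))) (cwd p (f (idx n b (u+k))))).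
        * rewrite (cwdT1 p) in H1 by auto. lra.
        * rewrite (cwdT2 p) in H1 by (auto; lra). lra.
    - replace (x + k)%nat with ((S q)*n + (u+k-n))%nat by lia.
      destruct (blk n (S q) (u+k-n)) as [-> ->]; [lia|]. rewrite S_INR.
      destruct (Rle_lt_or_eq_dec _ _ (Mono (u+k-n)%nat u ltac:(lia))) as [Hl|He].
      + destruct (EdgeB u (u+k-n)%nat ltac:(lia) ltac:(lia)) as [He|H1].
        * rewrite He in Hl. lra.
        * rewrite (cwdT2 p) in H1 by auto. lra.
      + exfalso. apply (Degen u (u+k-n)%nat); auto; lia. }
  assert (Chain: forall j x, g (x + S j * k)%nat < g x + INR (S j) * r).
  { induction j; intros x.
    - replace (x + 1 * k)%nat with (x + k)%nat by lia. specialize (Step x). simpl INR. lra.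
    - replace (x + S (S j) * k)%nat with ((x + S j * k) + k)%nat by lia.
      specialize (Step (x + S j * k)%nat). specialize (IHj x). rewrite (S_INR (S j)). lra. }
  specialize (Chain (2*l)%nat (n-1)%nat). replace (S (2*l)) with (2*l+1)%nat in Chain by lia.
  assert (Hg0: g (n-1)%nat <= 1 - E).
  { unfold g. replace (n-1)%nat with (0*n + (n-1))%nat by lia.
    destruct (blk n 0 (n-1)) as [-> ->]; [lia|]. simpl INR. specialize (HEF (n-1)%nat). lra. }
  assert (Hg1: E + INR (l+1) <= g (n - 1 + (2*l+1)*k)%nat).
  { unfold g. specialize (HEF ((n - 1 + (2 * l + 1) * k) mod n)%nat).
    assert (l+1 <= (n - 1 + (2*l+1)*k) / n)%nat.
    { apply Nat.div_le_lower_bound; lia. }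
    apply le_INR in H. lra. }
  rewrite plus_INR in Hg1. simpl INR in Hg1. lra.
Qed.

Lemma circ_bounds p x E : on_circle p -> on_circle x -> 0 < E -> E <= circ_dist p x -> E <= cwd p x <= 1 - E.
Proof. unfold on_circle, circ_dist, cwd, Rmin; intros; repeat destruct Rle_dec; lra. Qed.

Theorem proposition5p4 (l : nat) (r : R) (X : list R)
  (Hr1 : INR l / INR (2 * l + 1) < r) (Hr2 : r < 1 / 2)
  (HX : forall x, In x X -> on_circle x)
  (Hwf : Rbar_lt (Finite (INR l / INR (2 * l + 1))) (wf_lt X r)) :
  eps_covering X ((INR l + 1 / 2) * (r - INR l / INR (2 * l + 1))).
Proof.
  set (E := (INR l + 1 / 2) * (r - INR l / INR (2 * l + 1))).
  assert (HM: INR (2*l+1) = 2 * INR l + 1) by (rewrite plus_INR, mult_INR; simpl; lra).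
  assert (Hl0: 0 <= INR l) by apply pos_INR.
  assert (HE: 0 < E).
  { unfold E. apply Rmult_lt_0_compat; lra. }
  assert (Hq0: 0 <= INR l / INR (2*l+1)).
  { rewrite HM. apply Rdiv_le_0_compat; lra. }
  destruct (classic (eps_covering X E)) as [H|H]; [exact H|exfalso].
  unfold eps_covering in H. apply not_all_ex_not in H. destruct H as [p Hp].
  apply imply_to_and in Hp. destruct Hp as [Hpc Hp].
  assert (HXE: forall x, In x X -> E <= cwd p x <= 1 - E).
  { intros x Hx. apply circ_bounds; auto. destruct (Rle_dec E (circ_dist p x)) as [|Hn]; auto.
    exfalso. apply Hp. exists x. split; auto. lra. }
  assert (Hex: exists q, (exists (n k : nat) (f : nat -> R),
    (2 * k < n)%nat /\ cyclic_hom n k X r f /\ q = INR k / INR n) /\ INR l / INR (2 * l + 1) < q).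
  { destruct (classic (exists q, (exists (n k : nat) (f : nat -> R),
    (2 * k < n)%nat /\ cyclic_hom n k X r f /\ q = INR k / INR n) /\ INR l / INR (2 * l + 1) < q)) as [|Hn]; auto.
    exfalso. destruct (Lub_Rbar_correct (fun q => exists (n k : nat) (f : nat -> R),
      (2 * k < n)%nat /\ cyclic_hom n k X r f /\ q = INR k / INR n)) as [_ Hlub].
    apply (Rbar_lt_not_le _ _ Hwf). apply Hlub. intros q Hq. simpl.
    destruct (Rle_dec q (INR l / INR (2 * l + 1))); auto. exfalso. apply Hn. exists q. split; auto. lra. }
  destruct Hex as [q [[n [k [f [Hkn [Hch ->]]]]] Hlt]].
  assert (Hn: 0 < INR n) by (apply lt_0_INR; lia).
  assert (Hlk: (l * n < k * (2*l+1))%nat).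
  { apply INR_lt. rewrite !mult_INR.
    assert (HM0: 0 < INR (2*l+1)) by lra.
    set (a := INR k / INR n) in Hlt. set (c := INR l / INR (2*l+1)) in Hlt.
    assert (INR k = a * INR n) by (unfold a; field; lra).
    assert (INR l = c * INR (2*l+1)) by (unfold c; field; lra).
    rewrite H, H0. assert (Hpp: 0 < (a - c) * (INR n * INR (2*l+1))) by (apply Rmult_lt_0_compat; [lra|apply Rmult_lt_0_compat; lra]). nra. }
  apply (core n k f X r E p l); auto.
  - lra.
  - assert (2*E = INR (2*l+1) * r - INR l) by (unfold E; rewrite HM; field; lra). lra.
Qed.
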